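(* Let $S\subset\mathbb R^d$ be a thin horizontal strip and let $K\subset S$ be a connected closed set that separates $\mathcal U^+(S)$ and $\mathcal U^-(S)$ (i.e. they lie in different connected components of $\mathbb R^d\setminus K$). Then $C_S\subset K$, where $C_S=\overline{\mathcal U^+(S)}\cap\overline{\mathcal U^-(S)}$.
   Context: $\pi_d$ is the last coordinate projection. $S\subset\mathbb R^d$ is horizontal if $\pi_d(S)$ is bounded and $\mathbb R^d\setminus S$ contains two distinct connected components with unbounded $\pi_d$-image: $\mathcal U^+(S)$ (bounded below) and $\mathcal U^-(S)$ (bounded above). A horizontal strip is a horizontal connected closed set $S$ with $\mathbb R^d\setminus S=\mathcal U^+(S)\cup\mathcal U^-(S)$. Thin means empty interior. *)

(* Defs.v *)
From mathcomp Require Import ssreflect ssrbool eqtype ssrnat fintype.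
From Stdlib Require Import Reals.
Open Scope R_scope.

(* Points of R^d with d = n.+1 >= 1 (so that pi_d makes sense). *)
Definition point (n : nat) := 'I_n.+1 -> R.
Definition rset (n : nat) := point n -> Prop.

Definition pi_d {n : nat} (x : point n) : R := x ord_max.

(* open ball for the sup norm (same topology as the Euclidean one) *)
Definition ball {n : nat} (x : point n) (r : R) : rset n :=
  fun y => forall i : 'I_n.+1, Rabs (y i - x i) < r.

Definition complement {n : nat} (A : rset n) : rset n := fun x => ~ A x.

Definition is_open {n : nat} (U : rset n) : Prop :=
  forall x, U x -> exists r, 0 < r /\ forall y, ball x r y -> U y.

Definition is_closed {n : nat} (A : rset n) : Prop := is_open (complement A).

Definition closure {n : nat} (A : rset n) : rset n :=
  fun x => forall r, 0 < r -> exists y, A y /\ ball x r y.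

Definition thin {n : nat} (A : rset n) : Prop :=
  ~ exists x r, 0 < r /\ forall y, ball x r y -> A y.

Definition connected {n : nat} (A : rset n) : Prop :=
  ~ exists U V : rset n, is_open U /\ is_open V /\
      (forall x, A x -> U x \/ V x) /\
      (exists x, A x /\ U x) /\ (exists x, A x /\ V x) /\
      (forall x, A x -> U x -> V x -> False).

Definition same_component {n : nat} (X : rset n) (x y : point n) : Prop :=
  exists C : rset n, (forall z, C z -> X z) /\ connected C /\ C x /\ C y.

Definition is_component {n : nat} (X C : rset n) : Prop :=
  exists x, X x /\ forall y, C y <-> same_component X x y.

Definition pi_bounded_below {n : nat} (A : rset n) : Prop :=
  exists m, forall x, A x -> m <= pi_d x.
Definition pi_bounded_above {n : nat} (A : rset n) : Prop :=
  exists M, forall x, A x -> pi_d x <= M.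
Definition pi_bounded {n : nat} (A : rset n) : Prop :=
  pi_bounded_below A /\ pi_bounded_above A.

Definition is_Uplus {n : nat} (S C : rset n) : Prop :=
  is_component (complement S) C /\ ~ pi_bounded C /\ pi_bounded_below C.
Definition is_Uminus {n : nat} (S C : rset n) : Prop :=
  is_component (complement S) C /\ ~ pi_bounded C /\ pi_bounded_above C.

Definition set_eq {n : nat} (A B : rset n) : Prop := forall x, A x <-> B x.

Definition horizontal {n : nat} (S : rset n) : Prop :=
  pi_bounded S /\
  exists Up Um, is_Uplus S Up /\ is_Uminus S Um /\ ~ set_eq Up Um.

Definition horizontal_strip {n : nat} (S : rset n) : Prop :=
  horizontal S /\ connected S /\ is_closed S /\
  forall Up Um, is_Uplus S Up -> is_Uminus S Um ->
    forall x, complement S x <-> (Up x \/ Um x).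

(* Main.v *)
Require Import Defs.
From mathcomp Require Import ssreflect ssrbool eqtype ssrnat fintype.
From Stdlib Require Import Reals.
From Stdlib Require Import Lra Psatz Classical FunctionalExtensionality.
Open Scope R_scope.

Lemma interval_conn {n : nat} (q : R -> point n) (P U V : rset n) :
  (forall s, 0 <= s <= 1 -> forall rho, 0 < rho -> exists d, 0 < d /\
      forall s', Rabs (s' - s) < d -> ball (q s) rho (q s')) ->
  (forall s, 0 <= s <= 1 -> P (q s)) ->
  is_open U -> is_open V ->
  (forall w, P w -> U w \/ V w) ->
  (forall w, P w -> U w -> V w -> False) ->
  U (q 0) -> V (q 1) -> False.
Proof.
move=> Hc HP HU HV Hcov Hdis U0 V1.
set T := fun t => 0 <= t <= 1 /\ forall s, 0 <= s <= t -> U (q s).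
have Hb : bound T by exists 1 => t [[? ?] _].
have Hne : exists t, T t.
  exists 0; split; first lra.
  move=> s Hs; have -> : s = 0 by lra. done.
case: (completeness T Hb Hne) => s0 [Hub Hlub].
have H0 : 0 <= s0.
  case: Hne => t0 Ht0. have := Hub t0 Ht0. case: Ht0 => [[? ?] _]. lra.
have H1 : s0 <= 1.
  apply: Hlub => t [[? ?] _]; done.
have A : forall s, 0 <= s < s0 -> U (q s).
  move=> s Hs.
  apply: NNPP => Hn.
  have : s0 <= s.
    apply: Hlub => t [Ht Ht2].
    apply: Rnot_lt_le => Hlt; apply: Hn; apply: Ht2; lra.
  lra.
case: (Hcov _ (HP s0 (conj H0 H1))) => Hs0.
- case: (HU _ Hs0) => rho [Hrho Hball].
  case: (Hc s0 (conj H0 H1) rho Hrho) => d [Hd Hcd].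
  case: (Req_dec s0 1) => Hs1.
    apply: (Hdis (q 1)); [apply: HP; lra | | done].
    by rewrite -Hs1.
  set t' := Rmin 1 (s0 + d/2).
  have Ht' : T t'.
    split; first by (split; [unfold t'; apply Rmin_glb; lra | apply Rmin_l]).
    move=> s Hs.
    case: (Rlt_le_dec s s0) => Hss; first by apply: A; lra.
    apply: Hball; apply: Hcd.
    have : t' <= s0 + d/2 by apply Rmin_r.
    move=> ?; rewrite Rabs_right; lra.
  have : t' <= s0 by apply: Hub.
  unfold t'; move=> Hle.
  have : s0 < Rmin 1 (s0 + d/2) by apply Rmin_glb_lt; lra.
  lra.
- case: (HV _ Hs0) => rho [Hrho Hball].
  case: (Hc s0 (conj H0 H1) rho Hrho) => d [Hd Hcd].
  case: (Req_dec s0 0) => Hs1.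
    apply: (Hdis (q 0)); [apply: HP; lra | done | ].
    by rewrite -Hs1.
  set t' := Rmax 0 (s0 - d/2).
  have Ht1 : 0 <= t' by apply Rmax_l.
  have Ht2 : t' < s0 by apply Rmax_lub_lt; lra.
  have Ht3 : s0 - d/2 <= t' by apply Rmax_r.
  apply: (Hdis (q t')); [apply: HP; lra | apply: A; lra |].
  apply: Hball; apply: Hcd.
  rewrite Rabs_left; lra.
Qed.

Definition seg {n : nat} (y z : point n) (t : R) : point n :=
  fun i => y i + t * (z i - y i).

Lemma seg_ball {n : nat} (x y z : point n) r t :
  ball x r y -> ball x r z -> 0 <= t <= 1 -> ball x r (seg y z t).
Proof.
move=> Hy Hz Ht i; rewrite /seg.
have E : y i + t * (z i - y i) - x i = (1 - t) * (y i - x i) + t * (z i - x i) by ring.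
rewrite E.
have a := Hy i; have b := Hz i.
apply: Rle_lt_trans; first apply Rabs_triang.
rewrite !Rabs_mult (Rabs_right (1 - t)); last lra.
rewrite (Rabs_right t); last lra.
have := Rabs_pos (y i - x i); have := Rabs_pos (z i - x i).
set A := Rabs (y i - x i) in a *; set B := Rabs (z i - x i) in b *.
move=> ? ?.
case: (Req_dec t 0) => Ht0.
  rewrite Ht0; lra.
have : t * B < t * r by apply Rmult_lt_compat_l; lra.
have : (1 - t) * A <= (1 - t) * r by apply Rmult_le_compat_l; lra.
lra.
Qed.

Lemma seg_conn {n : nat} (x y z : point n) r :
  0 < r -> ball x r y -> ball x r z ->
  connected (fun w => exists t, 0 <= t <= 1 /\ w = seg y z t).
Proof.
move=> Hr Hy Hz [U [V [HU [HV [Hcov [[w1 [[t1 [Ht1 E1]] U1]] [[w2 [[t2 [Ht2 E2]] V2]] Hdis]]]]]]].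
subst w1 w2.
pose q s := seg y z (t1 + s * (t2 - t1)).
apply: (interval_conn q (fun w => exists t, 0 <= t <= 1 /\ w = seg y z t) U V) => //.
- move=> s Hs rho Hrho.
  exists (rho / (2 * r)); split; first by apply Rdiv_lt_0_compat; lra.
  move=> s' Hs' i; rewrite /q /seg.
  have E : y i + (t1 + s' * (t2 - t1)) * (z i - y i) -
           (y i + (t1 + s * (t2 - t1)) * (z i - y i))
           = (s' - s) * ((t2 - t1) * (z i - y i)) by ring.
  rewrite E Rabs_mult Rabs_mult.
  have a := Hy i; have b := Hz i.
  have Hzy : Rabs (z i - y i) <= 2 * r.
    have -> : z i - y i = (z i - x i) + (x i - y i) by ring.
    apply: Rle_trans; first apply Rabs_triang.
    rewrite (Rabs_minus_sym (x i)). lra.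
  have Htt : Rabs (t2 - t1) <= 1 by apply Rabs_le; lra.
  have Hp : Rabs (t2 - t1) * Rabs (z i - y i) <= 2 * r.
    have := Rabs_pos (t2 - t1); have := Rabs_pos (z i - y i); nra.
  have Hs'' : Rabs (s' - s) * (2 * r) < rho.
    have -> : rho = rho / (2 * r) * (2 * r) by field; lra.
    apply Rmult_lt_compat_r; lra.
  have := Rabs_pos (s' - s); have := Rabs_pos (t2 - t1); have := Rabs_pos (z i - y i).
  nra.
- move=> s Hs; exists (t1 + s * (t2 - t1)); split; last done.
  nra.
- by rewrite /q; replace (t1 + 0 * (t2 - t1)) with t1 by ring.
- by rewrite /q; replace (t1 + 1 * (t2 - t1)) with t2 by ring.
Qed.

Theorem mainTheorem10 (n : nat) (S K Up Um : rset n) :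
  horizontal_strip S -> thin S ->
  is_Uplus S Up -> is_Uminus S Um ->
  (forall x, K x -> S x) -> connected K -> is_closed K ->
  (forall x y, Up x -> Um y -> ~ same_component (complement K) x y) ->
  forall x, closure Up x -> closure Um x -> K x.
Proof.
move=> _ _ _ _ _ _ HK Hsep x Hp Hm.
apply: NNPP => Hx.
case: (HK x Hx) => r [Hr Hball].
case: (Hp r Hr) => y [Upy Hy].
case: (Hm r Hr) => z [Umz Hz].
apply: (Hsep y z Upy Umz).
have By : ball x r y := Hy.
have Bz : ball x r z := Hz.
exists (fun w => exists t, 0 <= t <= 1 /\ w = seg y z t); split; [|split; [|split]].
- move=> w [t [Ht ->]]; apply: Hball; exact: seg_ball.
- exact: seg_conn Hr By Bz.
- exists 0; split; first lra.
  apply: functional_extensionality => i; rewrite /seg; ring.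
- exists 1; split; first lra.
  apply: functional_extensionality => i; rewrite /seg; ring.
Qed.
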